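(* Let $N\ge1$, $V=\{1,\dots,N\}$, $A$ an $N\times N$ row-stochastic matrix, and $\sigma_1,\sigma_2,\dots$ random variables with values in $2^V$. Consider $x(k+1)=A_{\sigma_k}x(k)$, $k\ge1$, with deterministic $x(1)\in\mathbb R^N$. Suppose: (a) $\mathcal G(A)$ is rooted. (b) There exists $\alpha\in(0,1)$ such that whenever $\mathbb P(\sigma_k\mid\sigma_{k-1},\dots,\sigma_1)\neq0$, it is $\ge\alpha$. (c) $\mathbb P(\sigma_k=\{j\}\mid\sigma_{k-1},\dots,\sigma_1)\neq0$ for all $j\in V$ and all $k\ge1$. Then the iteration reaches consensus almost surely.
   Context: $\mathcal G(A)$ is the directed graph on $V$ with an edge $(j,i)$ iff $a_{ij}>0$; it is rooted if some node $r$ has a directed path to every other node. For $\sigma\subseteq V$, $A_\sigma$ is the matrix whose $j$-th row equals the $j$-th row of $A$ if $j\in\sigma$ and $e_j^T$ otherwise. For $k=1$ conditional probabilities given the empty past are unconditional. The iteration reaches consensus almost surely if for every $\varepsilon>0$ and every $x(1)$, $\lim_{k\to\infty}\mathbb P\big(\sum_{j=1}^N (x_j(k)-\frac1N\sum_{i=1}^N x_i(k))^2\ge\varepsilon\big)=0$. *)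

(* Defs.v *)
From HB Require Import structures.
From mathcomp Require Import all_boot all_order all_algebra.
From mathcomp Require Import all_classical all_reals all_analysis.

Set Implicit Arguments.
Unset Strict Implicit.
Unset Printing Implicit Defensive.

Import Order.TTheory GRing.Theory Num.Theory.
Local Open Scope classical_set_scope.
Local Open Scope ring_scope.

Section Defs.
Variable R : realType.
Variable N : nat.

Definition row_stochastic (A : 'M[R]_N) : Prop :=
  (forall i j, 0 <= A i j) /\ (forall i, \sum_(j < N) A i j = 1).

Definition graph_edge (A : 'M[R]_N) : rel 'I_N := fun j i => 0 < A i j.

Definition rooted (A : 'M[R]_N) : Prop :=
  exists r : 'I_N, forall i : 'I_N, connect (graph_edge A) r i.

Definition A_sub (A : 'M[R]_N) (s : {set 'I_N}) : 'M[R]_N :=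
  \matrix_(j, l) (if j \in s then A j l else (j == l)%:R).

(* trajectory: traj A sig x1 n = x(n+1), where sig n = sigma_(n+1);
   x(1) = x1, x(k+1) = A_(sigma_k) x(k). *)
Fixpoint traj (A : 'M[R]_N) (sig : nat -> {set 'I_N}) (x1 : 'cV[R]_N) (n : nat)
  : 'cV[R]_N :=
  match n with
  | 0 => x1
  | n'.+1 => A_sub A (sig n') *m traj A sig x1 n'
  end.

Definition disagreement (x : 'cV[R]_N) : R :=
  \sum_(j < N) (x j 0 - (N%:R)^-1 * \sum_(i < N) x i 0) ^+ 2.
End Defs.

Section Prob.
Context {d : measure_display} {T : measurableType d} {R : realType} {N : nat}.
Variable P : probability T R.
Variable sigma : nat -> T -> {set 'I_N}.

(* the past sigma_1, ..., sigma_k (with sigma n = sigma_(n+1)) *)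
Definition past (k : nat) (w : T) : seq {set 'I_N} :=
  [seq sigma i w | i <- iota 0 k].

Definition past_event (k : nat) (h : seq {set 'I_N}) : set T :=
  [set w | past k w = h].

(* P(sigma_(k+1) = s | (sigma_1..sigma_k) = h), meaningful when the
   conditioning event has positive probability *)
Definition cond_prob (k : nat) (h : seq {set 'I_N}) (s : {set 'I_N}) : R :=
  fine (P (past_event k h `&` [set w | sigma k w = s])) /
  fine (P (past_event k h)).
End Prob.

(* Main.v *)
Require Import Defs.
From HB Require Import structures.
From mathcomp Require Import all_boot all_order all_algebra.
From mathcomp Require Import all_classical all_reals all_analysis.
From mathcomp Require Import ring lra.
Import Order.TTheory GRing.Theory Num.Theory.
Local Open Scope classical_set_scope.
Local Open Scope ring_scope.
Set Implicit Arguments. Unset Strict Implicit.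

Section Det.
Variable R : realType.
Variable N : nat.
Variable A : 'M[R]_N.
Hypothesis HA : row_stochastic A.

Lemma A_subE (s : {set 'I_N}) (x : 'cV[R]_N) k :
  (A_sub A s *m x) k 0 = if k \in s then \sum_l A k l * x l 0 else x k 0.
Proof.
rewrite mxE; under eq_bigr do rewrite mxE.
case: (k \in s) => //.
rewrite (bigD1 k) //= eqxx mul1r big1 ?addr0 // => l /negbTE.
by rewrite eq_sym => ->; rewrite mul0r.
Qed.

Definition inb (lo hi : R) (x : 'cV[R]_N) := forall i, lo <= x i 0 <= hi.

Lemma sum_conv (k : 'I_N) (c : R) : \sum_l A k l * c = c.
Proof. by rewrite -mulr_suml HA.2 mul1r. Qed.

Lemma upd_inb lo hi s x : inb lo hi x -> inb lo hi (A_sub A s *m x).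
Proof.
move=> hx i; rewrite A_subE; case: (i \in s) => //.
apply/andP; split.
  rewrite -(sum_conv i lo); apply: ler_sum => l _.
  by apply: ler_wpM2l; [exact: HA.1 | case/andP: (hx l)].
rewrite -(sum_conv i hi); apply: ler_sum => l _.
by apply: ler_wpM2l; [exact: HA.1 | case/andP: (hx l)].
Qed.

Lemma traj_inb lo hi sig x1 n t :
  inb lo hi (traj A sig x1 n) -> inb lo hi (traj A sig x1 (n + t)).
Proof.
elim: t => [|t IH]; first by rewrite addn0.
by move=> h; rewrite addnS /=; apply: upd_inb; apply: IH.
Qed.

Definition upd (x : 'cV[R]_N) (j : 'I_N) := A_sub A ([set j]%SET) *m x.
Definition app (js : seq 'I_N) (x : 'cV[R]_N) := foldl upd x js.

Lemma traj_block sig x1 n js :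
  [seq sig i | i <- iota n (size js)] = [seq [set j]%SET | j <- js] ->
  traj A sig x1 (n + size js) = app js (traj A sig x1 n).
Proof.
elim: js n => [|j js IH] n /=; first by rewrite addn0.
case=> hs hr; rewrite addnS -addSn IH //=.
by rewrite /upd hs.
Qed.

Lemma A_le1 i j : A i j <= 1.
Proof.
rewrite -(HA.2 i) (bigD1 j) //= lerDl; apply: sumr_ge0 => l _; exact: HA.1.
Qed.

Lemma beta_ex : exists beta : R, 0 < beta <= 1 /\ forall i j, 0 < A i j -> beta <= A i j.
Proof.
pose F (ij : 'I_N * 'I_N) := if 0 < A ij.1 ij.2 then A ij.1 ij.2 else 1.
have F01 ij : 0 < F ij <= 1.
  rewrite /F; case: ifP => h; last by rewrite ltr01 lexx.
  by rewrite h A_le1.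
exists (\prod_ij F ij); split.
  apply/andP; split; first by apply: prodr_gt0 => ij _; case/andP: (F01 ij).
  by apply: prodr_ile1 => ij _; case/andP: (F01 ij) => /ltW -> ->.
move=> i j hij; rewrite (bigD1 (i, j)) //=.
have -> : F (i, j) = A i j by rewrite /F /= hij.
rewrite -{2}(mulr1 (A i j)); apply: ler_wpM2l; first exact: ltW.
by apply: prodr_ile1 => ij _; case/andP: (F01 ij) => /ltW -> ->.
Qed.

End Det.


Section Det2.
Variable R : realType.
Variable N : nat.
Variable A : 'M[R]_N.
Hypothesis HA : row_stochastic A.
Variables (beta lo hi v : R) (r : 'I_N).
Hypothesis hbeta : 0 < beta <= 1.
Hypothesis hbA : forall i j, 0 < A i j -> beta <= A i j.

Definition Inv (Rs : {set 'I_N}) (g : R) (y : 'cV[R]_N) :=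
  [/\ inb lo hi y, y r 0 = v, r \in Rs,
   (forall k, k \in Rs -> k != r -> exists2 p, p \in Rs & 0 < A k p) &
   (forall k, k \in Rs -> g * v + (1 - g) * lo <= y k 0 <= g * v + (1 - g) * hi)].

Lemma upd_bound (Rs : {set 'I_N}) (g : R) (y : 'cV[R]_N) (j p : 'I_N) :
  inb lo hi y -> 0 <= g <= 1 -> lo <= v <= hi ->
  (forall k, k \in Rs -> g * v + (1 - g) * lo <= y k 0 <= g * v + (1 - g) * hi) ->
  p \in Rs -> 0 < A j p ->
  (beta * g) * v + (1 - beta * g) * lo <= \sum_l A j l * y l 0 <=
  (beta * g) * v + (1 - beta * g) * hi.
Proof.
move=> hy /andP[g0 g1] /andP[lov vhi] hR pR Ap.
have bp := hbA Ap.
have hS : \sum_l A j l = 1 := HA.2 j.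
rewrite (bigD1 p) //= in hS.
rewrite (bigD1 p) //=.
set S2 := \sum_(l | l != p) A j l in hS.
set S1 := \sum_(l | l != p) A j l * y l 0.
have S1u : S1 <= S2 * hi.
  rewrite /S1 /S2 mulr_suml; apply: ler_sum => l _.
  by apply: ler_wpM2l; [exact: HA.1 | case/andP: (hy l)].
have S1l : S2 * lo <= S1.
  rewrite /S1 /S2 mulr_suml; apply: ler_sum => l _.
  by apply: ler_wpM2l; [exact: HA.1 | case/andP: (hy l)].
case/andP: (hR p pR) => ypl ypu.
have a0 : 0 <= A j p := ltW Ap.
have h1 := ler_wpM2l a0 ypu.
have h2 := ler_wpM2l a0 ypl.
have h3 : 0 <= (A j p - beta) * (g * (hi - v)).
  by apply: mulr_ge0; [rewrite subr_ge0 | apply: mulr_ge0; rewrite ?subr_ge0].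
have h4 : 0 <= (A j p - beta) * (g * (v - lo)).
  by apply: mulr_ge0; [rewrite subr_ge0 | apply: mulr_ge0; rewrite ?subr_ge0].
have e1 : S2 * hi = hi - A j p * hi by rewrite (_ : S2 = 1 - A j p); [ring | lra].
have e2 : S2 * lo = lo - A j p * lo by rewrite (_ : S2 = 1 - A j p); [ring | lra].
apply/andP; split; lra.
Qed.


Lemma Inv_step (Rs : {set 'I_N}) (g : R) (y : 'cV[R]_N) (j : 'I_N) :
  j != r -> 0 <= g <= 1 -> Inv Rs g y ->
  Inv (if [exists p in Rs, 0 < A j p] then j |: Rs else Rs) (beta * g) (upd A y j).
Proof.
move=> jr /andP[g0 g1] [hy yr rR hcl hb].
have /andP[lov vhi] : lo <= v <= hi by rewrite -yr; exact: hy.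
have updE k : (upd A y j) k 0 = if k == j then \sum_l A j l * y l 0 else y k 0.
  by rewrite /upd A_subE finset.in_set1; case: eqP => // ->.
have hb0 : 0 <= beta * g by apply: mulr_ge0 => //; case/andP: hbeta => /ltW.
have mono k : k \in Rs ->
    (beta * g) * v + (1 - beta * g) * lo <= y k 0 <= (beta * g) * v + (1 - beta * g) * hi.
  move=> /hb /andP[l u].
  have h1 : 0 <= g * (1 - beta) * (v - lo).
    by apply: mulr_ge0; [apply: mulr_ge0; rewrite ?subr_ge0; case/andP: hbeta | rewrite subr_ge0].
  have h2 : 0 <= g * (1 - beta) * (hi - v).
    by apply: mulr_ge0; [apply: mulr_ge0; rewrite ?subr_ge0; case/andP: hbeta | rewrite subr_ge0].
  apply/andP; split; nra.
split.
- exact: upd_inb.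
- by rewrite updE (_ : (r == j) = false) // eq_sym (negbTE jr).
- by case: ifP => _ //; rewrite in_setU1 rR orbT.
- case: ifP => [/existsP[p /andP[pR Ap]]|hne] k.
    rewrite in_setU1 => /orP[/eqP ->|kR] kr; first by exists p => //; rewrite in_setU1 pR orbT.
    by case: (hcl k kR kr) => q qR Aq; exists q => //; rewrite in_setU1 qR orbT.
  exact: hcl.
- move=> k kR; rewrite updE; case: (k =P j) => [ekj|nkj]; last first.
    apply: mono; move: kR; case: ifP => // _; rewrite in_setU1 => /orP[/eqP ekj|//].
    by case: nkj.
  subst k.
  have [p pR Ap] : exists2 p, p \in Rs & 0 < A j p.
    move: kR; case: ifP => [/existsP[p /andP[pR Ap]] _|_ jR]; first by exists p.
    exact: hcl.
  apply: (upd_bound hy _ _ hb pR Ap); apply/andP; split => //.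
Qed.


Lemma Inv_list (l : seq 'I_N) : all (fun j => j != r) l ->
  forall (Rs : {set 'I_N}) (g : R) (y : 'cV[R]_N), 0 <= g <= 1 -> Inv Rs g y ->
  exists Rs' : {set 'I_N},
    [/\ Inv Rs' (g * beta ^+ size l) (app A l y), Rs \subset Rs' &
        forall i, i \in l -> [exists p in Rs, 0 < A i p] -> i \in Rs'].
Proof.
elim: l => [|j l IH] /=.
  by move=> _ Rs g y hg hI; exists Rs; split; rewrite ?expr0 ?mulr1 ?subxx.
move=> /andP[hjr hl] Rs g y hg hI.
have hI1 := Inv_step hjr hg hI.
set R1 := (if _ then _ else _) in hI1.
have hg1 : 0 <= beta * g <= 1.
  case/andP: hg => g0 g1; case/andP: hbeta => b0 b1.
  apply/andP; split; first by apply: mulr_ge0 => //; exact: ltW.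
  by rewrite -(mulr1 1); apply: ler_pM => //; exact: ltW.
have sub1 : Rs \subset R1.
  rewrite /R1; case: ifP => _; last exact: subxx.
  by apply/fintype.subsetP => k kR; rewrite in_setU1 kR orbT.
have [Rs' [hI' s' hin]] := IH hl R1 (beta * g) (upd A y j) hg1 hI1.
exists Rs'; split.
- by rewrite exprS mulrA (mulrC g).
- exact: fintype.subset_trans s'.
- move=> i; rewrite in_cons => /orP[/eqP ->|il] hex.
    apply: (fintype.subsetP s'); rewrite /R1 hex; exact: finset.setU11.
  apply: hin => //; case/existsP: hex => p /andP[pR Ap].
  by apply/existsP; exists p; rewrite (fintype.subsetP sub1).
Qed.

Definition jr := [seq j <- enum 'I_N | j != r].

Lemma Inv_round (Rs : {set 'I_N}) (g : R) (y : 'cV[R]_N) : 0 <= g <= 1 -> Inv Rs g y ->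
  exists Rs' : {set 'I_N},
    [/\ Inv Rs' (g * beta ^+ size jr) (app A jr y), Rs \subset Rs' &
        forall i p, p \in Rs -> 0 < A i p -> i \in Rs'].
Proof.
move=> hg hI.
have hl : all (fun j => j != r) jr by apply/allP => j; rewrite mem_filter => /andP[].
have [Rs' [hI' s' hin]] := Inv_list hl hg hI.
exists Rs'; split => // i p pR Ap.
case: (i =P r) => [->|/eqP ir]; first by case: hI'.
apply: hin; first by rewrite mem_filter ir mem_enum.
by apply/existsP; exists p; rewrite pR.
Qed.

Hypothesis hroot : forall i, connect (graph_edge A) r i.

Lemma closed_all (Rs : {set 'I_N}) : r \in Rs ->
  (forall i p, p \in Rs -> 0 < A i p -> i \in Rs) -> Rs = [set: 'I_N]%SET.
Proof.
move=> rR hcl; apply/setP => i; rewrite finset.in_setT.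
have /connectP [q hq ->] := hroot i.
elim: q r rR hq => [|a q IH] x xR //= /andP[e hq].
apply: IH hq; exact: hcl e.
Qed.

Lemma Inv_rounds n : forall (Rs : {set 'I_N}) (g : R) (y : 'cV[R]_N), 0 <= g <= 1 -> Inv Rs g y ->
  exists Rs' : {set 'I_N},
    [/\ Inv Rs' (g * beta ^+ size (flatten (nseq n jr))) (app A (flatten (nseq n jr)) y),
        Rs \subset Rs' & (#|Rs| + n <= #|Rs'|)%N || (Rs' == [set: 'I_N]%SET)].
Proof.
elim: n => [|n IH] Rs g y hg hI.
  by exists Rs; split; rewrite ?expr0 ?mulr1 ?subxx ?addn0 ?leqnn.
have [R1 [hI1 s1 hcl1]] := Inv_round hg hI.
have hg1 : 0 <= g * beta ^+ size jr <= 1.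
  case/andP: hg => g0 g1; case/andP: hbeta => b0 b1.
  apply/andP; split; first by apply: mulr_ge0 => //; apply: exprn_ge0; exact: ltW.
  by rewrite -(mulr1 1); apply: ler_pM => //; [apply: exprn_ge0; exact: ltW | apply: exprn_ile1 => //; exact: ltW].
have [Rs' [hI' s' hc']] := IH R1 _ (app A jr y) hg1 hI1.
exists Rs'; split.
- by rewrite /= /app foldl_cat size_cat exprD mulrA.
- exact: fintype.subset_trans s'.
- case/orP: hc' => [hc'|->]; last by rewrite orbT.
  case: (boolP [forall i, forall p, (p \in Rs) && (0 < A i p) ==> (i \in Rs)]) => [hf|].
    have eT : Rs = [set: 'I_N]%SET.
      apply: closed_all; first by case: hI.
      move=> i p pR Ap; move/forallP: hf => /(_ i) /forallP /(_ p); rewrite pR Ap; exact.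
    have eT' : Rs' = [set: 'I_N]%SET.
      by apply/eqP; rewrite finset.eqEsubset finset.subsetT /=; rewrite -eT; exact: fintype.subset_trans s'.
    by rewrite eT' eqxx orbT.
  move/forallPn => [i /forallPn [p]]; rewrite negb_imply => /andP[/andP[pR Ap] iR].
  have iR1 := hcl1 i p pR Ap.
  have lt1 : (#|Rs| < #|R1|)%N.
    apply: proper_card; rewrite properE s1 /=; apply/subsetPn; exists i => //.
  by apply/orP; left; rewrite addnS; apply: leq_trans hc'; rewrite ltn_add2r.
Qed.


Lemma contract_inv (x : 'cV[R]_N) : inb lo hi x -> x r 0 = v ->
  inb (beta ^+ size (flatten (nseq N jr)) * v + (1 - beta ^+ size (flatten (nseq N jr))) * lo)
      (beta ^+ size (flatten (nseq N jr)) * v + (1 - beta ^+ size (flatten (nseq N jr))) * hi)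
      (app A (flatten (nseq N jr)) x).
Proof.
move=> hx xr.
have hI : Inv [set r]%SET 1 x.
  split.
  - exact: hx.
  - exact: xr.
  - exact: finset.set11.
  - by move=> k; rewrite finset.in_set1 => /eqP ->; rewrite eqxx.
  - by move=> k; rewrite finset.in_set1 => /eqP ->; rewrite xr; apply/andP; split; lra.
have h01 : 0 <= (1:R) <= 1 by apply/andP; split; lra.
have [Rs' [hI' _ hc]] := Inv_rounds N h01 hI.
have eT : Rs' = [set: 'I_N]%SET.
  case/orP: hc => [hc|/eqP //].
  have := max_card (mem Rs'); rewrite card_ord => hle; rewrite cards1 in hc.
  by have := leq_trans hc hle; rewrite add1n ltnn.
case: hI' => _ _ _ _ hb k; rewrite mul1r in hb; by apply: hb; rewrite eT finset.in_setT.
Qed.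

End Det2.


Section Det3.
Variable R : realType.
Variable N : nat.

Definition Sb (d : R) (x : 'cV[R]_N) := exists lo hi, hi - lo <= d /\ inb lo hi x.

Lemma Sb_mono (A : 'M[R]_N) (HA : row_stochastic A) d sig x1 n t :
  Sb d (traj A sig x1 n) -> Sb d (traj A sig x1 (n + t)).
Proof. by case=> lo [hi [h1 h2]]; exists lo, hi; split => //; apply: traj_inb. Qed.

Lemma Sb_init (x : 'cV[R]_N) : Sb (2 * \sum_i `|x i 0|) x.
Proof.
exists (- \sum_i `|x i 0|), (\sum_i `|x i 0|); split; first by rewrite opprK mulr2n mulrDl mul1r lexx.
move=> i; have : `|x i 0| <= \sum_i `|x i 0|.
  rewrite (bigD1 i) //= lerDl; apply: sumr_ge0 => l _; exact: normr_ge0.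
rewrite ler_norml => /andP[h1 h2]; apply/andP; split => //.
Qed.

Lemma Sb_dis d (x : 'cV[R]_N) : (0 < N)%N -> Sb d x -> disagreement x <= N%:R * d ^+ 2.
Proof.
move=> N0 [lo [hi [hd hx]]].
set av := (N%:R)^-1 * \sum_i x i 0.
have Npos : 0 < (N%:R : R) by rewrite ltr0n.
have hav : lo <= av <= hi.
  have s1 : N%:R * lo <= \sum_i x i 0.
    have -> : N%:R * lo = \sum_(i < N) lo by rewrite sumr_const card_ord mulr_natl.
    apply: ler_sum => i _; by case/andP: (hx i).
  have s2 : \sum_i x i 0 <= N%:R * hi.
    have -> : N%:R * hi = \sum_(i < N) hi by rewrite sumr_const card_ord mulr_natl.
    apply: ler_sum => i _; by case/andP: (hx i).
  rewrite /av; apply/andP; split.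
    by rewrite ler_pdivlMl // mulrC.
  by rewrite ler_pdivrMl // mulrC.
have lohi : lo <= hi by case/andP: hav => h1 h2; exact: le_trans h2.
rewrite /disagreement -/av.
have -> : N%:R * d ^+ 2 = \sum_(j < N) d ^+ 2 by rewrite sumr_const card_ord mulr_natl.
apply: ler_sum => j _.
case/andP: (hx j) => h1 h2; case/andP: hav => h3 h4.
have hj : `|x j 0 - av| <= d.
  rewrite ler_norml; apply/andP; split; lra.
rewrite -real_normK ?num_real //; apply: ler_pM => //; exact: normr_ge0.
Qed.

Variable A : 'M[R]_N.
Hypothesis HA : row_stochastic A.
Variables (beta : R) (r : 'I_N).
Hypothesis hbeta : 0 < beta <= 1.
Hypothesis hbA : forall i j, 0 < A i j -> beta <= A i j.
Hypothesis hroot : forall i, connect (graph_edge A) r i.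

Definition jf := flatten (nseq N (jr r)).
Definition cc := beta ^+ size jf.

Lemma cc01 : 0 < cc <= 1.
Proof.
case/andP: hbeta => b0 b1; apply/andP; split; first exact: exprn_gt0.
by apply: exprn_ile1 => //; exact: ltW.
Qed.

Lemma Sb_contract d x : Sb d x -> Sb ((1 - cc) * d) (app A jf x).
Proof.
case=> lo [hi [hd hx]].
have := contract_inv HA hbeta hbA hroot hx (erefl (x r 0)).
rewrite -/jf -/cc => h.
eexists; eexists; split; last exact: h.
case/andP: cc01 => c0 c1.
have : 0 <= 1 - cc by rewrite subr_ge0.
move=> h1; have := ler_wpM2l h1 hd; nra.
Qed.

Lemma Sb_rep m d x : Sb d x -> Sb ((1 - cc) ^+ m * d) (app A (flatten (nseq m jf)) x).
Proof.
elim: m d x => [|m IH] d x hx; first by rewrite expr0 mul1r.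
rewrite /= /app foldl_cat -/(app A jf x) -/(app A _ _).
rewrite exprSr -mulrA; apply: IH; exact: Sb_contract.
Qed.

End Det3.


Section Prob1.
Context {d : measure_display} {T : measurableType d} {R : realType} {N : nat}.
Variable P : probability T R.
Variable sigma : nat -> T -> {set 'I_N}.
Hypothesis msig : forall (n : nat) (s : {set 'I_N}), measurable (sigma n @^-1` [set s]).

Definition pr (E : set T) : R := fine (P E).

Lemma prE E : measurable E -> P E = (pr E)%:E.
Proof. by move=> mE; rewrite /pr fineK //; apply: fin_num_measure. Qed.

Lemma pr_ge0 E : 0 <= pr E.
Proof. by rewrite /pr; apply: fine_ge0; apply: measure_ge0. Qed.

Lemma pr_le1 E : measurable E -> pr E <= 1.
Proof. by move=> mE; rewrite -lee_fin -prE //; apply: probability_le1. Qed.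

Lemma prU E F : measurable E -> measurable F -> E `&` F = set0 -> pr (E `|` F) = pr E + pr F.
Proof.
move=> mE mF hEF.
have : P (E `|` F) = P E + P F by apply: measureU.
have mEF : measurable (E `|` F) by apply: measurableU.
by rewrite !prE // => -[].
Qed.

Lemma pr_le E F : measurable E -> measurable F -> E `<=` F -> pr E <= pr F.
Proof.
move=> mE mF hEF; rewrite -lee_fin -!prE //; by apply: le_measure => //; rewrite inE.
Qed.

Lemma size_past n w : size (past sigma n w) = n.
Proof. by rewrite /past size_map size_iota. Qed.

Lemma past_succ n w : past sigma n.+1 w = rcons (past sigma n w) (sigma n w).
Proof. by rewrite /past -addn1 iotaD map_cat cats1. Qed.

Lemma take_past j n w : (j <= n)%N -> take j (past sigma n w) = past sigma j w.
Proof. by move=> hj; rewrite /past -map_take take_iota (minn_idPl hj). Qed.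

Lemma meas_pe n h : measurable (past_event sigma n h).
Proof.
elim: n h => [|n IH] h.
  case: h => [|a h].
    by rewrite (_ : past_event _ _ _ = setT) //; apply/seteqP; split => w //=.
  by rewrite (_ : past_event _ _ _ = set0) //; apply/seteqP; split => w //=.
case/lastP: h => [|h s].
  rewrite (_ : past_event _ _ _ = set0) //; apply/seteqP; split => w //=.
rewrite (_ : past_event _ _ _ = past_event sigma n h `&` sigma n @^-1` [set s]).
  by apply: measurableI; [exact: IH | exact: msig].
apply/seteqP; split => w /=; rewrite /past_event /= past_succ.
  by move/eqP; rewrite eqseq_rcons => /andP[/eqP -> /eqP ->].
by case=> -> ->.
Qed.

Lemma meas_in n (s : seq (seq {set 'I_N})) : measurable [set w | past sigma n w \in s].
Proof.
elim: s => [|h s IH].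
  by rewrite (_ : [set w | _] = set0) //; apply/seteqP; split => w //=.
rewrite (_ : [set w | _] = past_event sigma n h `|` [set w | past sigma n w \in s]).
  by apply: measurableU => //; exact: meas_pe.
apply/seteqP; split => w /=; rewrite in_cons.
  by case/orP => [/eqP|]; [left | right].
by case => [->|->]; rewrite ?eqxx ?orbT.
Qed.

Definition allseq n : seq (seq {set 'I_N}) := map val (enum {: n.-tuple {set 'I_N}}).

Lemma allseq_uniq n : uniq (allseq n).
Proof. by rewrite map_inj_uniq ?enum_uniq //; exact: val_inj. Qed.

Lemma past_in_allseq n w : past sigma n w \in allseq n.
Proof.
have hs : size (past sigma n w) == n by rewrite size_past.
by apply/mapP; exists (Tuple hs); rewrite ?mem_enum.
Qed.

Lemma Qset n (Q : pred (seq {set 'I_N})) :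
  [set w | Q (past sigma n w)] = [set w | past sigma n w \in [seq h <- allseq n | Q h]].
Proof.
by apply/seteqP; split => w /=; rewrite mem_filter past_in_allseq andbT.
Qed.

Lemma meas_Q n (Q : pred (seq {set 'I_N})) : measurable [set w | Q (past sigma n w)].
Proof. by rewrite Qset; exact: meas_in. Qed.

Lemma decomp n (G : set T) (s : seq (seq {set 'I_N})) : measurable G -> uniq s ->
  pr (G `&` [set w | past sigma n w \in s]) = \sum_(h <- s) pr (G `&` past_event sigma n h).
Proof.
move=> mG; elim: s => [|h s IH] /=.
  rewrite big_nil (_ : _ `&` _ = set0) ?/pr ?measure0 //.
  by apply/seteqP; split => w //= [].
move=> /andP[hs us]; rewrite big_cons -IH //.
rewrite (_ : _ `&` _ = (G `&` past_event sigma n h) `|` (G `&` [set w | past sigma n w \in s])).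
  apply: prU.
  - by apply: measurableI => //; exact: meas_pe.
  - by apply: measurableI => //; exact: meas_in.
  - apply/seteqP; split => w //= [[_ e] [_ hw]]; move: hs; rewrite -e hw //.
apply/seteqP; split => w /=.
  by case=> gw; rewrite in_cons => /orP[/eqP|]; [left | right].
by case => -[gw hw]; split => //; rewrite in_cons; [move: hw => /= ->; rewrite eqxx | rewrite hw orbT].
Qed.

End Prob1.


Section Prob2.
Context {d : measure_display} {T : measurableType d} {R : realType} {N : nat}.
Variable P : probability T R.
Variable sigma : nat -> T -> {set 'I_N}.
Hypothesis msig : forall (n : nat) (s : {set 'I_N}), measurable (sigma n @^-1` [set s]).
Variable alpha : R.
Hypothesis halpha : 0 < alpha < 1.
Hypothesis hb : forall (k : nat) (h : seq {set 'I_N}) (s : {set 'I_N}),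
      (0 < P (past_event sigma k h))%E ->
      cond_prob P sigma k h s != 0 -> alpha <= cond_prob P sigma k h s.
Hypothesis hc : forall (k : nat) (h : seq {set 'I_N}) (j : 'I_N),
      (0 < P (past_event sigma k h))%E ->
      cond_prob P sigma k h [set j]%SET != 0.

Lemma pe_succ k h s : past_event sigma k.+1 (rcons h s) =
  past_event sigma k h `&` [set w | sigma k w = s].
Proof.
apply/seteqP; split => w /=; rewrite /past_event /= past_succ.
  by move/eqP; rewrite eqseq_rcons => /andP[/eqP -> /eqP ->].
by case=> -> ->.
Qed.

Lemma chain k h (j : 'I_N) :
  alpha * pr P (past_event sigma k h) <= pr P (past_event sigma k.+1 (rcons h [set j]%SET)).
Proof.
have [e0|ne0] := eqVneq (pr P (past_event sigma k h)) 0.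
  by rewrite e0 mulr0; exact: pr_ge0.
have pos : 0 < pr P (past_event sigma k h) by rewrite lt0r ne0 pr_ge0.
have Ppos : (0 < P (past_event sigma k h))%E by rewrite (prE P) ?lte_fin //; exact: meas_pe.
have := hb Ppos (hc j Ppos).
by rewrite /cond_prob -/(pr P _) -/(pr P _) ler_pdivlMr // pe_succ.
Qed.

Lemma ext (js : seq 'I_N) : forall k h,
  alpha ^+ size js * pr P (past_event sigma k h) <=
  pr P (past_event sigma (k + size js) (h ++ [seq [set j]%SET | j <- js])).
Proof.
elim: js => [|j js IH] k h /=; first by rewrite expr0 mul1r addn0 cats0.
rewrite -cat_rcons addnS -addSn.
apply: le_trans (IH k.+1 (rcons h [set j]%SET)).
rewrite exprSr -mulrA; apply: ler_wpM2l; first by apply: exprn_ge0; case/andP: halpha => /ltW.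
exact: chain.
Qed.

Section Step.
Variable js : seq 'I_N.
Let L := size js.
Let U := [seq [set j]%SET | j <- js].

Definition Gset n := [set w | past sigma (n + L) w != past sigma n w ++ U].

Lemma meas_G n : measurable (Gset n).
Proof.
rewrite (_ : Gset n = [set w | (fun h => h != take n h ++ U) (past sigma (n + L) w)]).
  exact: (meas_Q msig (n + L) (fun h => h != take n h ++ U)).
by apply/seteqP; split => w /=; rewrite take_past ?leq_addr.
Qed.

Lemma step n (Q : pred (seq {set 'I_N})) :
  pr P ([set w | Q (past sigma n w)] `&` Gset n) <=
  (1 - alpha ^+ L) * pr P [set w | Q (past sigma n w)].
Proof.
rewrite (Qset sigma n Q) setIC (decomp P msig) ?meas_G ?filter_uniq ?allseq_uniq //.
rewrite -[X in _ * pr P X]setTI (decomp P msig) ?filter_uniq ?allseq_uniq //.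
rewrite mulr_sumr big_seq [X in _ <= X]big_seq; apply: ler_sum => h.
rewrite mem_filter => /andP[_ /mapP [t _ ->]].
rewrite setTI.
set pe := past_event sigma n (val t).
have mpe : measurable pe by exact: meas_pe.
have hsplit : pe = (Gset n `&` pe) `|` past_event sigma (n + L) (val t ++ U).
  apply/seteqP; split => w /=.
    move=> hw; case: (boolP (past sigma (n + L) w == past sigma n w ++ U)) => e.
      by right; rewrite /past_event /=; move/eqP: e => ->; move: hw; rewrite /pe /past_event /= => ->.
    by left.
  case => [[]//|hw]; rewrite /pe /past_event /= -(take_past sigma _ (leq_addr L n)) hw.
  by rewrite take_cat size_tuple ltnn subnn take0 cats0.
have hdis : (Gset n `&` pe) `&` past_event sigma (n + L) (val t ++ U) = set0.
  apply/seteqP; split => w //= [[hG hw] hw2]; move: hG hw hw2.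
  by rewrite /Gset /pe /past_event /= => hG hw hw2; rewrite hw2 hw eqxx in hG.
have := prU P (measurableI _ _ (meas_G n) mpe) (meas_pe msig _ _) hdis.
rewrite -hsplit => e.
have := ext js n (val t); rewrite -/L -/U => hx.
rewrite mulrBl mul1r; lra.
exact: meas_G.
Qed.

Definition Bad K := [set w | all (fun b => past sigma (b * L + L) w != past sigma (b * L) w ++ U) (iota 0 K)].

Lemma BadQ_aux K w : {in iota 0 K, forall b,
   (take (b * L + L) (past sigma (K * L) w) != take (b * L) (past sigma (K * L) w) ++ U) =
   (past sigma (b * L + L) w != past sigma (b * L) w ++ U)}.
Proof.
move=> b; rewrite mem_iota add0n => /andP[_ hbK].
have h1 : (b * L + L <= K * L)%N by rewrite -mulSnr leq_mul2r hbK orbT.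
by rewrite !take_past // (leq_trans (leq_addr L _) h1).
Qed.

Lemma BadQ K : Bad K = [set w | (fun h => all (fun b => take (b * L + L) h != take (b * L) h ++ U) (iota 0 K)) (past sigma (K * L) w)].
Proof.
by apply/seteqP; split => w /=; rewrite (eq_in_all (@BadQ_aux K w)).
Qed.

Lemma meas_Bad K : measurable (Bad K).
Proof. rewrite BadQ; exact: (meas_Q msig (K * L) (fun h => all (fun b => take (b * L + L) h != take (b * L) h ++ U) (iota 0 K))). Qed.

Lemma Bad_bound K : pr P (Bad K) <= (1 - alpha ^+ L) ^+ K.
Proof.
elim: K => [|K IH].
  by rewrite expr0; apply: pr_le1; exact: meas_Bad.
have -> : Bad K.+1 = Bad K `&` Gset (K * L).
  have ei : iota 0 K.+1 = iota 0 K ++ [:: K] by rewrite -addn1 iotaD.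
  apply/seteqP; split => w; rewrite /Bad /Gset ei /= all_cat /= andbT.
    by case/andP.
  by case=> -> ->.
pose Q := (fun h : seq {set 'I_N} => all (fun b => take (b * L + L) h != take (b * L) h ++ U) (iota 0 K)).
have eB : Bad K = [set w | Q (past sigma (K * L) w)] by rewrite BadQ.
rewrite eB; apply: le_trans (step (K * L) Q) _; rewrite -eB exprS.
apply: ler_wpM2l => //.
rewrite subr_ge0; apply: exprn_ile1; case/andP: halpha => /ltW // _ /ltW //.
Qed.

End Step.
End Prob2.


Unset Implicit Arguments. Set Strict Implicit.

Lemma traj_ext (R : realType) (N : nat) (A : 'M[R]_N) sig sig' x1 k :
  (forall n, (n < k)%N -> sig n = sig' n) -> traj A sig x1 k = traj A sig' x1 k.
Proof.
elim: k => [|k IH] h //=; rewrite h // IH // => n hn; apply: h; exact: ltnW.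
Qed.

Lemma ev_lt (R : realType) (q e : R) : 0 <= q < 1 -> 0 < e -> exists m : nat, q ^+ m < e.
Proof.
move=> /andP[q0 q1] e0.
have hq : `|q| < 1 by rewrite ger0_norm.
have := cvg_expr hq; move/cvgr0Pnorm_lt => /(_ e e0) [m0 _ hm].
exists m0; have := hm m0 (leqnn m0); rewrite /= ger0_norm //; exact: exprn_ge0.
Qed.

Theorem corollary4 (d : measure_display) (T : measurableType d) (R : realType)
  (N : nat) (P : probability T R) (A : 'M[R]_N)
  (sigma : nat -> T -> {set 'I_N}) (alpha : R) :
  (0 < N)%N ->
  row_stochastic A ->
  (forall (n : nat) (s : {set 'I_N}), measurable (sigma n @^-1` [set s])) ->
  rooted A ->
  0 < alpha < 1 ->
  (forall (k : nat) (h : seq {set 'I_N}) (s : {set 'I_N}),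
      (0 < P (past_event sigma k h))%E ->
      cond_prob P sigma k h s != 0 -> alpha <= cond_prob P sigma k h s) ->
  (forall (k : nat) (h : seq {set 'I_N}) (j : 'I_N),
      (0 < P (past_event sigma k h))%E ->
      cond_prob P sigma k h [set j] != 0) ->
  forall (eps : R) (x1 : 'cV[R]_N), 0 < eps ->
    (fun k : nat =>
       P [set w | eps <= disagreement (traj A (fun n => sigma n w) x1 k)])
      @ \oo --> 0%E.
Proof.
move=> N0 HA msig [r hroot] halpha hb hc eps x1 eps0.
have [beta [hbeta hbA]] := beta_ex HA.
set q := 1 - cc beta r.
have /andP[c0 c1] := cc01 r hbeta.
have hq : 0 <= q < 1 by rewrite /q; apply/andP; split; lra.
set d0 := 2 * \sum_i `|x1 i 0|.
have d00 : 0 <= d0 by rewrite /d0; apply: mulr_ge0 => //; apply: sumr_ge0 => i _; exact: normr_ge0.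
have Npos : 0 < (N%:R : R) by rewrite ltr0n.
have epos : 0 < eps / (N%:R * d0 ^+ 2 + 1).
  by apply: divr_gt0 => //; apply: ltr_pwDr => //; apply: mulr_ge0; [exact: ltW | exact: sqr_ge0].
have [m hm] := @ev_lt R _ _ hq epos.
have qm0 : 0 <= q ^+ m by apply: exprn_ge0; case/andP: hq.
have qm1 : q ^+ m <= 1 by apply: exprn_ile1; case/andP: hq => // _ /ltW.
have key : N%:R * (q ^+ m * d0) ^+ 2 < eps.
  have h1 : q ^+ m * (N%:R * d0 ^+ 2 + 1) < eps.
    by rewrite -ltr_pdivlMr // ltr_pwDr //; apply: mulr_ge0; [exact: ltW | exact: sqr_ge0].
  have h2 : (q ^+ m * d0) ^+ 2 <= q ^+ m * d0 ^+ 2.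
    rewrite exprMn; apply: ler_wpM2r; first exact: sqr_ge0.
    rewrite expr2; nra.
  have h3 : 0 <= q ^+ m * (N%:R * d0 ^+ 2) by apply: mulr_ge0 => //; apply: mulr_ge0; [exact: ltW | exact: sqr_ge0].
  have h4 := ler_wpM2l (ltW Npos) h2.
  nra.
set js := flatten (nseq m (jf r)).
set L := size js.
set a := alpha ^+ L.
have /andP[al0 al1] := halpha.
have a0 : 0 < a by apply: exprn_gt0.
have a1 : a <= 1 by apply: exprn_ile1 => //; exact: ltW.
pose Qd (k : nat) (h : seq {set 'I_N}) :=
  eps <= disagreement (traj A (fun n => nth [set: 'I_N]%SET h n) x1 k).
have eQ k : [set w | eps <= disagreement (traj A (fun n => sigma n w) x1 k)] =
            [set w | Qd k (past sigma k w)].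
  apply/seteqP; split => w /=; rewrite /Qd (@traj_ext _ _ A (fun n => sigma n w) (fun n => nth [set: 'I_N]%SET (past sigma k w) n)) //;
    move=> n hn; rewrite /past (nth_map 0%N) ?size_iota // nth_iota //.
have mE k : measurable [set w | eps <= disagreement (traj A (fun n => sigma n w) x1 k)].
  by rewrite eQ; exact: (meas_Q msig k (Qd k)).
have incl K t : (K * L <= t)%N ->
   [set w | eps <= disagreement (traj A (fun n => sigma n w) x1 t)] `<=` Bad sigma js K.
  move=> hKt w /= hw; apply/negPn/negP => /allPn [b]; rewrite mem_iota add0n => /andP[_ hbK].
  move/negPn/eqP => e.
  have blk : [seq sigma i w | i <- iota (b * L) L] = [seq [set j]%SET | j <- js].
    move: e; rewrite /past iotaD map_cat add0n => /eqP; rewrite eqseq_cat // eqxx /=.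
    by move/eqP.
  have tb := traj_block A x1 blk.
  have S0 := Sb_init (R := R) x1.
  have S1 : Sb d0 (traj A (fun n => sigma n w) x1 (b * L)).
    by have := Sb_mono HA (b * L) (n := 0) (sig := fun n => sigma n w) S0; rewrite add0n.
  have S2 := Sb_rep HA hbeta hbA hroot m S1.
  rewrite -/js -tb -/q in S2.
  have hle : (b * L + L <= t)%N.
    apply: leq_trans hKt; rewrite -mulSnr leq_mul2r hbK orbT //.
  have S3 := Sb_mono HA (t - (b * L + L)) S2.
  rewrite subnKC // in S3.
  have := Sb_dis N0 S3; lra.
apply: cvg_EFin.
  by apply: nearW => k; apply: fin_num_measure; exact: mE.
apply/cvgr0Pnorm_le => e e0.
have ha : 0 <= 1 - a < 1 by apply/andP; split; lra.
have [K hK] := @ev_lt R _ _ ha e0.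
exists (K * L)%N => // t /= hKt.
rewrite ger0_norm; last by apply: fine_ge0; exact: measure_ge0.
have := Bad_bound msig halpha hb hc js K; rewrite -/L -/a => hB.
have := pr_le P (mE t) (meas_Bad msig js K) (incl K t hKt).
rewrite /pr in hB * => h; lra.
Qed.
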